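(* For any $n\geq 1$, $R_n$ listed in both Reflected Gray Code Order $\prec$ and co-Reflected Gray Code Order is a $3$-adjacent Gray code.
   Context: A restricted growth function of length $n$ is an integer sequence $s_1s_2\ldots s_n$ with $s_1=0$ and $0\leq s_{i+1}\leq \max\{s_j\}_{j=1}^i+1$ for $1\leq i\leq n-1$; $R_n$ is the set of these. On $\{0,1,\ldots,m-1\}^n$ ($m\geq2$), let $k$ be the first position where $s_1\ldots s_n$ and $t_1\ldots t_n$ differ. Reflected Gray Code Order $\prec$: $\mathbf s\prec\mathbf t$ if either $\sum_{i=1}^{k-1}s_i$ is even and $s_k<t_k$, or it is odd and $s_k>t_k$. co-Reflected Gray Code Order: $\mathbf s$ is less than $\mathbf t$ if either $U_k$ is even and $s_k<t_k$, or $U_k$ is odd and $s_k>t_k$, where $U_k=|\{i\in\{1,\ldots,k-1\}: s_i\neq0,\ s_i \text{ even}\}|$. A list of same-length sequences is a $d$-adjacent Gray code if successive sequences differ in at most $d$ positions and these positions are adjacent. *)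

(* Defs.v *)
From mathcomp Require Import all_boot.
Set Implicit Arguments. Unset Strict Implicit. Unset Printing Implicit Defensive.

(* Sequences are 0-indexed: position i (0-based) is s_{i+1} in the paper. *)

Definition is_rgf (n : nat) (s : seq nat) : bool :=
  [&& size s == n, nth 0 s 0 == 0 &
      all (fun i => nth 0 s i.+1 <= (\max_(j < i.+1) nth 0 s j).+1) (iota 0 n.-1)].

(* first (0-based) position where s and t differ; = size s if none *)
Definition first_diff (s t : seq nat) : nat :=
  find (fun i => nth 0 s i != nth 0 t i) (iota 0 (size s)).

Definition refl_lt (P : seq nat -> nat -> nat) (s t : seq nat) : bool :=
  let k := first_diff s t in
  (k < size s) &&
  (if ~~ odd (P s k) then nth 0 s k < nth 0 t k else nth 0 t k < nth 0 s k).

(* sum_{i=1}^{k-1} s_i  (1-based), i.e. sum of the first k entries (0-based k) *)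
Definition prefix_sum (s : seq nat) (k : nat) : nat := \sum_(i < k) nth 0 s i.

Definition prefix_U (s : seq nat) (k : nat) : nat :=
  count (fun i => (nth 0 s i != 0) && ~~ odd (nth 0 s i)) (iota 0 k).

Definition rgc_lt : rel (seq nat) := refl_lt prefix_sum.
Definition corgc_lt : rel (seq nat) := refl_lt prefix_U.

Definition diff_pos (n : nat) (s t : seq nat) : seq nat :=
  [seq i <- iota 0 n | nth 0 s i != nth 0 t i].

Definition d_close (d n : nat) (s t : seq nat) : bool :=
  let D := diff_pos n s t in
  (size D <= d) && (D == iota (head 0 D) (size D)).

Definition adj_gray_code (d n : nat) (L : seq (seq nat)) : bool :=
  all (fun s => size s == n) L &&
  all (fun p => d_close d n p.1 p.2) (zip L (behead L)).

Definition rgf_listing (lt : rel (seq nat)) (n : nat) (L : seq (seq nat)) : Prop :=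
  uniq L /\ (forall s, s \in L = is_rgf n s) /\ sorted lt L.

(* Main.v *)
Require Import Defs.
From mathcomp Require Import all_boot zify.
Set Implicit Arguments. Unset Strict Implicit. Unset Printing Implicit Defensive.

Lemma fd_spec s t : first_diff s t < size s ->
  (forall i, i < first_diff s t -> nth 0 s i = nth 0 t i) /\
  nth 0 s (first_diff s t) != nth 0 t (first_diff s t).
Proof.
rewrite /first_diff => H.
have Hs : find (fun i => nth 0 s i != nth 0 t i) (iota 0 (size s)) < size (iota 0 (size s)) by rewrite size_iota.
split.
- move=> i Hi.
  have := before_find 0 Hi.
  rewrite nth_iota ?add0n; last by lia.
  by move/negbFE/eqP.
- rewrite -has_find in Hs.
  have := nth_find 0 Hs.
  by rewrite nth_iota ?add0n //; rewrite -has_find in H; rewrite has_find size_iota in Hs.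
Qed.

Lemma fd_eq s t k : k < size s -> (forall i, i < k -> nth 0 s i = nth 0 t i) ->
  nth 0 s k != nth 0 t k -> first_diff s t = k.
Proof.
move=> Hk Hlt Hne; rewrite /first_diff.
set a := (fun i => nth 0 s i != nth 0 t i).
have Hh : has a (iota 0 (size s)).
  apply/hasP; exists k => //; by rewrite mem_iota.
case: (ltngtP (find a (iota 0 (size s))) k) => // H.
- have := nth_find 0 Hh.
  have Hf : find a (iota 0 (size s)) < size s by lia.
  by rewrite nth_iota ?add0n // /a Hlt ?eqxx.
- have := before_find 0 H.
  by rewrite nth_iota ?add0n // /a Hne.
Qed.

Lemma fd_self s : first_diff s s = size s.
Proof.
rewrite /first_diff.
have -> : find (fun i => nth 0 s i != nth 0 s i) (iota 0 (size s)) = find pred0 (iota 0 (size s)).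
  by apply: eq_find => i; rewrite eqxx.
by rewrite find_pred0 size_iota.
Qed.

Definition prefix_det (P : seq nat -> nat -> nat) :=
  forall s t k, (forall i, i < k -> nth 0 s i = nth 0 t i) -> P s k = P t k.

Section Ord.
Variable P : seq nat -> nat -> nat.
Hypothesis HP : prefix_det P.

Lemma rl_congr s t s' t' : size s' = size s -> first_diff s t < size s ->
  (forall i, i <= first_diff s t -> nth 0 s' i = nth 0 s i) ->
  (forall i, i <= first_diff s t -> nth 0 t' i = nth 0 t i) ->
  refl_lt P s' t' = refl_lt P s t.
Proof.
move=> Hsz Hk Hs Ht.
have [H1 H2] := fd_spec Hk.
set k := first_diff s t in Hk Hs Ht H1 H2 *.
have Hfd : first_diff s' t' = k.
  apply: fd_eq; first by rewrite Hsz.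
  - move=> i Hi; rewrite Hs ?Ht; [exact: H1 | lia | lia].
  - by rewrite Hs ?Ht.
rewrite /refl_lt Hfd Hsz Hk Hs ?Ht //.
by rewrite (HP (t:=s)) // => i Hi; rewrite Hs //; lia.
Qed.

Lemma rl_size s t : refl_lt P s t -> first_diff s t < size s.
Proof. by case/andP. Qed.

Lemma rl_irr s : refl_lt P s s = false.
Proof. by rewrite /refl_lt fd_self ltnn. Qed.

Lemma rl_trans s t u : size s = size t -> size t = size u ->
  refl_lt P s t -> refl_lt P t u -> refl_lt P s u.
Proof.
move=> E1 E2 Hst Htu.
have K1 := rl_size Hst; have K2 := rl_size Htu.
have [A1 B1] := fd_spec K1; have [A2 B2] := fd_spec K2.
set k1 := first_diff s t in K1 A1 B1 Hst.
set k2 := first_diff t u in K2 A2 B2 Htu.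
case: (ltngtP k1 k2) => Hk.
- rewrite (@rl_congr s t s u) // => i Hi.
  by rewrite A2 //; lia.
- rewrite (@rl_congr t u s u) //.
  move=> i Hi; rewrite -/k2 in Hi; rewrite A1 //; lia.
- move: Hst Htu; rewrite /refl_lt -/k1 -/k2 -Hk => /andP[_ Hst] /andP[_ Htu].
  have Pst : P s k1 = P t k1 by apply: HP.
  rewrite -Pst in Htu.
  have Hne : nth 0 s k1 != nth 0 u k1.
    by case: (odd (P s k1)) Hst Htu => /= X Y; apply/eqP => Z; rewrite Z in X; lia.
  have Hfd : first_diff s u = k1.
    apply: fd_eq => //; move=> i Hi; rewrite A1 // A2 //; lia.
  rewrite Hfd K1 /=.
  by case: (odd (P s k1)) Hst Htu => /= X Y; lia.
Qed.

Lemma rl_total s t : size s = size t -> s != t -> refl_lt P s t || refl_lt P t s.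
Proof.
move=> E Hne.
have Hk : first_diff s t < size s.
  rewrite /first_diff.
  suff Hh : has (fun i => nth 0 s i != nth 0 t i) (iota 0 (size s)) by move: Hh; rewrite has_find size_iota.
  apply: contraNT Hne; rewrite -all_predC => /allP Hall; apply/eqP.
  apply: (eq_from_nth (x0:=0)) => // i Hi.
  have := Hall i; rewrite mem_iota Hi /= => /(_ isT); by move/negbNE/eqP.
have [A B] := fd_spec Hk.
have Hk' : first_diff t s = first_diff s t.
  apply: fd_eq; [by rewrite -E | move=> i Hi; by rewrite A | by rewrite eq_sym].
rewrite /refl_lt Hk' -E Hk /=.
rewrite (HP (t:=s)); last by move=> i Hi; rewrite A.
by case: (odd (P s (first_diff s t))) B => /= B; lia.
Qed.
End Ord.

Definition maxpre (s : seq nat) j := \max_(i < j) nth 0 s i.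

Lemma maxpreS s j : maxpre s j.+1 = maxn (maxpre s j) (nth 0 s j).
Proof. by rewrite /maxpre big_ord_recr. Qed.

Lemma maxpre_ext s t j : (forall i, i < j -> nth 0 s i = nth 0 t i) -> maxpre s j = maxpre t j.
Proof. by move=> H; apply: eq_bigr => i _; apply: H. Qed.

Lemma rgfP n s : is_rgf n s <-> [/\ size s = n, nth 0 s 0 = 0 &
   forall i, i.+1 < n -> nth 0 s i.+1 <= (maxpre s i.+1).+1].
Proof.
rewrite /is_rgf; split.
- case/and3P => /eqP -> /eqP -> /allP H; split => // i Hi.
  apply: H; rewrite mem_iota; lia.
- case => -> -> H; rewrite !eqxx /=; apply/allP => i; rewrite mem_iota => Hi.
  apply: H; lia.
Qed.

Lemma rgf_bound n s : is_rgf n s -> forall i, nth 0 s i <= i.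
Proof.
case/rgfP => Hsz H0 H.
suff: forall i j, j <= i -> nth 0 s j <= j by move=> X i; exact: X.
elim => [|i IH] j Hj.
- have -> : j = 0 by lia.
  by rewrite H0.
- case: (ltngtP j i.+1) => Hji; [by apply: IH; lia | lia |].
  subst j.
  case: (ltnP i.+1 n) => Hn; last by rewrite nth_default //; lia.
  apply: leq_trans (H _ Hn) _; rewrite ltnS.
  apply/bigmax_leqP => x _; apply: leq_trans (IH x _) _; have := ltn_ord x; lia.
Qed.

Section Ext.
Variables (n : nat) (s : seq nat) (j v : nat).
Hypothesis Hsz : size s = n.
Hypothesis Hj : j < n.
Definition extu := take j s ++ v :: nseq (n - j.+1) 0.

Lemma extu_size : size extu = n.
Proof. rewrite /extu size_cat size_take /= size_nseq; case: ifP; lia. Qed.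

Lemma extu_lt i : i < j -> nth 0 extu i = nth 0 s i.
Proof.
Proof.
move=> Hi; rewrite /extu nth_cat size_takel; last lia.
by rewrite Hi nth_take.
Qed.

Lemma extu_eq : nth 0 extu j = v.
Proof. rewrite /extu nth_cat size_takel; last lia. by rewrite ltnn subnn. Qed.

Lemma extu_gt i : j < i -> nth 0 extu i = 0.
Proof.
move=> Hi; rewrite /extu nth_cat size_takel; last lia.
have -> : (i < j) = false by lia.
have -> : i - j = (i - j.+1).+1 by lia.
by rewrite /= nth_nseq; case: ifP.
Qed.

Lemma extu_rgf : is_rgf n s -> 0 < j -> v <= (maxpre s j).+1 -> is_rgf n extu.
Proof.
case/rgfP => _ H0 H Hj0 Hv; apply/rgfP; split.
- exact: extu_size.
- by rewrite extu_lt.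
- move=> i Hi.
  have Em : maxpre extu i.+1 = maxpre s i.+1 -> nth 0 extu i.+1 <= (maxpre s i.+1).+1 ->
       nth 0 extu i.+1 <= (maxpre extu i.+1).+1 by move=> ->.
  case: (ltngtP i.+1 j) => Hij.
  + apply: Em; first by apply: maxpre_ext => x Hx; rewrite extu_lt //; lia.
    by rewrite extu_lt //; apply: H.
  + by rewrite extu_gt.
  + apply: Em; first by apply: maxpre_ext => x Hx; rewrite extu_lt //; lia.
    by rewrite Hij extu_eq.
Qed.
End Ext.

Lemma dclose_of d n s t k l : k + l <= n -> l <= d ->
  (forall i, i < n -> (nth 0 s i != nth 0 t i) = (k <= i < k + l)) -> d_close d n s t.
Proof.
move=> Hkl Hld H.
have E : diff_pos n s t = iota k l.
  apply: (irr_sorted_eq (leT:=ltn)); [exact: ltn_trans | exact: ltnn | | exact: iota_ltn_sorted |].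
  - apply: sorted_filter; [exact: ltn_trans | exact: iota_ltn_sorted].
  - move=> x; rewrite mem_filter !mem_iota add0n /=.
    case: (ltnP x n) => Hx; first by rewrite H // andbT.
    rewrite andbF; apply/esym/negbTE; apply/negP => /andP[_ X]; lia.
rewrite /d_close E size_iota Hld /=.
by case: l {Hkl Hld H E}.
Qed.

Section Key.
Variable P : seq nat -> nat -> nat.
Variable g : nat -> nat.
Hypothesis hP : forall s k, P s k = \sum_(i < k) g (nth 0 s i).
Hypothesis G1 : ~~ odd (g 0).
Hypothesis G2 : forall M, odd (g M.+1) || odd (g M.+2).

Lemma Pdet : prefix_det P.
Proof. move=> s t k H; rewrite !hP; apply: eq_bigr => i _; by rewrite H. Qed.

Lemma Podd s j : odd (P s j.+1) = odd (P s j) (+) odd (g (nth 0 s j)).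
Proof. by rewrite !hP big_ord_recr /= oddD. Qed.

Definition follows (x : seq nat) (r : bool) k n :=
  forall j, k < j -> j < n -> nth 0 x j = if odd (P x j) == r then (maxpre x j).+1 else 0.

Lemma zero_step x r k n j : follows x r k n -> k < j -> j.+1 < n -> nth 0 x j = 0 -> nth 0 x j.+1 = 0.
Proof.
move=> F Hk Hn H0.
have Hj := F j Hk (ltnW Hn).
have Hj1 := F j.+1 (ltnW Hk) Hn.
rewrite Hj1 Podd H0 (negbTE G1) addbF.
by move: Hj; rewrite H0; case: ifP.
Qed.

Lemma zero_after x r k n j0 : size x = n -> follows x r k n -> k < j0 -> nth 0 x j0 = 0 ->
  forall j, j0 <= j -> nth 0 x j = 0.
Proof.
move=> Hsz F Hk H0; elim => [|j IH] Hj.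
- by move: H0; have -> : j0 = 0 by lia.
- case: (ltngtP j0 j.+1) => Hj'; last by rewrite -Hj'.
  + case: (ltnP j.+1 n) => Hn; last by rewrite nth_default // Hsz.
    apply: (zero_step F) => //; [lia | apply: IH; lia].
  + lia.
Qed.

Lemma two_tops x r k n j : follows x r k n -> k < j -> j.+2 < n ->
  nth 0 x j != 0 -> nth 0 x j.+1 != 0 -> nth 0 x j.+2 = 0.
Proof.
move=> F Hk Hn N0 N1.
have Hj := F j Hk (ltnW (ltnW Hn)).
have Hj1 := F j.+1 (ltnW Hk) (ltnW Hn).
have Hj2 := F j.+2 ltac:(lia) Hn.
move: Hj Hj1 Hj2; set M := maxpre x j.
case: ifP => C0 Hj; last by rewrite Hj in N0.
rewrite maxpreS Hj -/M (_ : maxn M M.+1 = M.+1); last by lia.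
case: ifP => C1 Hj1; last by rewrite Hj1 in N1.
rewrite maxpreS Hj1 maxpreS Hj -/M (_ : maxn (maxn M M.+1) M.+2 = M.+2); last by lia.
rewrite Podd Hj1.
move: C1; rewrite Podd Hj.
move: (G2 M) C0.
move: F; by case: (odd (P x j)); case: r; case: (odd (g M.+1)); case: (odd (g M.+2)).
Qed.

Lemma three_zero x r k n : size x = n -> follows x r k n -> forall j, k.+3 <= j -> nth 0 x j = 0.
Proof.
move=> Hsz F.
suff [j0 [H1 H2 H3]] : exists j0, [/\ k < j0, j0 <= k.+3 & nth 0 x j0 = 0].
  move=> j Hj; apply: (zero_after Hsz F H1 H3); lia.
case: (ltnP k.+1 n) => N1; last by exists k.+1; split; [lia | lia | rewrite nth_default // Hsz].
case: (eqVneq (nth 0 x k.+1) 0) => X1; first by exists k.+1; split => //; lia.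
case: (ltnP k.+2 n) => N2; last by exists k.+2; split; [lia | lia | rewrite nth_default // Hsz].
case: (eqVneq (nth 0 x k.+2) 0) => X2; first by exists k.+2; split => //; lia.
exists k.+3; split => //; first lia.
case: (ltnP k.+3 n) => N3; last by rewrite nth_default // Hsz.
exact: (two_tops F).
Qed.

Lemma key n s t : is_rgf n s -> is_rgf n t -> refl_lt P s t ->
  (forall u, is_rgf n u -> refl_lt P s u -> refl_lt P u t -> False) -> d_close 3 n s t.
Proof.
move=> Rs Rt Hst Hno.
have HPd := Pdet.
have [Hs _ Rs'] := proj1 (rgfP n s) Rs.
have [Ht _ Rt'] := proj1 (rgfP n t) Rt.
have K := rl_size Hst.
have [A B] := fd_spec K.
set k := first_diff s t in K A B Hst.
have Kn : k < n by rewrite -Hs.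
have FS : follows s false k n.
  move=> j Hkj Hjn.
  set v := if odd (P s j) == false then (maxpre s j).+1 else 0.
  case: (eqVneq (nth 0 s j) v) => // E; exfalso.
  have Hv : v <= (maxpre s j).+1 by rewrite /v; case: ifP.
  have Hj0 : 0 < j by lia.
  apply: (Hno (extu n s j v)).
  - exact: extu_rgf.
  - have Hfd : first_diff s (extu n s j v) = j.
      apply: fd_eq; [by rewrite Hs | move=> i Hi; by rewrite extu_lt | by rewrite extu_eq].
    rewrite /refl_lt Hfd Hs Hjn extu_eq //=.
    have Hle : nth 0 s j <= (maxpre s j).+1.
      have -> : j = j.-1.+1 by lia.
      apply: Rs'; lia.
    move: E Hle; rewrite /v; case: (odd (P s j)) => /= E Hle; lia.
  - rewrite (@rl_congr P HPd s t) //.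
    + by rewrite extu_size.
    + move=> i Hi; rewrite extu_lt //; lia.
have FT : follows t true k n.
  move=> j Hkj Hjn.
  set v := if odd (P t j) == true then (maxpre t j).+1 else 0.
  case: (eqVneq (nth 0 t j) v) => // E; exfalso.
  have Hv : v <= (maxpre t j).+1 by rewrite /v; case: ifP.
  have Hj0 : 0 < j by lia.
  apply: (Hno (extu n t j v)).
  - exact: extu_rgf.
  - rewrite (@rl_congr P HPd s t) //.
    move=> i Hi; rewrite extu_lt //; lia.
  - have Hfd : first_diff (extu n t j v) t = j.
      apply: fd_eq; [by rewrite extu_size | move=> i Hi; by rewrite extu_lt | by rewrite eq_sym extu_eq].
    rewrite /refl_lt Hfd extu_size // Hjn extu_eq //=.
    rewrite (HPd _ t j); last by move=> i Hi; rewrite extu_lt.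
    have Hle : nth 0 t j <= (maxpre t j).+1.
      have -> : j = j.-1.+1 by lia.
      apply: Rt'; lia.
    move: E Hle; rewrite /v; case: (odd (P t j)) => /= E Hle; lia.
have Zs := three_zero Hs FS.
have Zt := three_zero Ht FT.
have F2 : k.+2 < n -> nth 0 s k.+1 = nth 0 t k.+1 -> nth 0 s k.+2 = nth 0 t k.+2.
  move=> N2 E1.
  case: (eqVneq (nth 0 s k.+1) 0) => X1.
    by rewrite (zero_step (j:=k.+1) FS) // (zero_step (j:=k.+1) FT) // -E1.
  have S1 := FS k.+1 (ltnSn k) ltac:(lia).
  have T1 := FT k.+1 (ltnSn k) ltac:(lia).
  have S2 := FS k.+2 ltac:(lia) N2.
  have T2 := FT k.+2 ltac:(lia) N2.
  move: S1 T1 S2 T2.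
  case: ifP => CS S1; last by rewrite S1 in X1.
  case: ifP => CT T1; last by rewrite E1 T1 in X1.
  have EM : maxpre s k.+1 = maxpre t k.+1 by move: E1; rewrite S1 T1 => -[].
  rewrite (maxpreS s k.+1) (maxpreS t k.+1) (Podd s k.+1) (Podd t k.+1) S1 T1 EM.
  move: CS CT; case: (odd (P s k.+1)); case: (odd (P t k.+1)); case: (odd (g (maxpre t k.+1).+1)) => //= _ _ -> -> //.
pose l := if (k.+1 < n) && (nth 0 s k.+1 != nth 0 t k.+1) then
            (if (k.+2 < n) && (nth 0 s k.+2 != nth 0 t k.+2) then 3 else 2) else 1.
apply: (@dclose_of 3 n s t k l).
- rewrite /l; case: ifP => [/andP[H1 _]|_]; [case: ifP => [/andP[H2 _]|_]|]; lia.
- by rewrite /l; case: ifP => //; case: ifP.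
move=> i Hi.
case: (ltngtP i k) => Hik.
- by rewrite A // eqxx; apply/esym/negbTE; lia.
- have [Ei|Hi1] := eqVneq i k.+1.
    subst i; rewrite /l Hi /=; case: (nth 0 s k.+1 != nth 0 t k.+1) => /=; [case: ifP => _ |]; lia.
  have [Ei|Hi2] := eqVneq i k.+2.
    subst i; rewrite /l Hi /=.
    case: (eqVneq (nth 0 s k.+2) (nth 0 t k.+2)) => E2 /=.
      case: ifP => _; lia.
    case: (eqVneq (nth 0 s k.+1) (nth 0 t k.+1)) => E1 /=.
      by move: E2; rewrite F2 // eqxx.
    have -> : k.+1 < n by lia.
    simpl; lia.
  rewrite Zs ?Zt ?eqxx; try lia.
  apply/esym/negbTE; rewrite /l; case: ifP => _; [case: ifP => _|]; lia.
- subst i; rewrite B /l; case: ifP => _; [case: ifP => _|]; lia.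
Qed.
End Key.

Fixpoint gen (b m : nat) : seq (seq nat) :=
  if m is m'.+1 then [seq x :: y | x <- iota 0 b, y <- gen b m'] else [:: [::]].

Lemma gen_mem b s : all (fun x => x < b) s -> s \in gen b (size s).
Proof.
elim: s => [|x s IH] //= /andP[Hx Hs].
apply: (allpairs_f (fun x y => x :: y)); first by rewrite mem_iota.
exact: IH.
Qed.

Lemma sorted_strict (lt : rel (seq nat)) (x : seq (seq nat)) : uniq x ->
  sorted (fun a b => (a == b) || lt a b) x -> sorted lt x.
Proof.
case: x => // a x; elim: x a => //= b x IH a /andP[Ha Hu] /andP[Hab Hp].
rewrite (IH b Hu Hp) andbT.
move: Hab; case: eqP => //= E; by rewrite E inE eqxx in Ha.
Qed.

Lemma zip_all (Q : seq nat -> seq nat -> bool) (L : seq (seq nat)) :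
  (forall i, i.+1 < size L -> Q (nth [::] L i) (nth [::] L i.+1)) ->
  all (fun p => Q p.1 p.2) (zip L (behead L)).
Proof.
elim: L => [|a L IH] //= H.
case: L IH H => [|b L] //= IH H.
rewrite (H 0) //=; apply: IH => i Hi; exact: (H i.+1).
Qed.

Section Gen.
Variable P : seq nat -> nat -> nat.
Variable g : nat -> nat.
Hypothesis hP : forall s k, P s k = \sum_(i < k) g (nth 0 s i).
Hypothesis G1 : ~~ odd (g 0).
Hypothesis G2 : forall M, odd (g M.+1) || odd (g M.+2).

Theorem gen_thm n : (exists L, rgf_listing (refl_lt P) n L) /\
   (forall L, rgf_listing (refl_lt P) n L -> adj_gray_code 3 n L).
Proof.
have HPd := Pdet hP.
split.
- pose le := fun a b => (a == b) || refl_lt P a b.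
  pose L0 := undup (filter (is_rgf n) (gen n n)).
  have HL0 : forall s, (s \in L0) = is_rgf n s.
    move=> s; rewrite mem_undup mem_filter.
    case R: (is_rgf n s) => //=.
    have [Hs _ _] := proj1 (rgfP n s) R.
    rewrite -{2}Hs; apply: gen_mem; apply/(all_nthP 0) => i Hi.
    by apply: leq_ltn_trans (rgf_bound R i) _; rewrite -Hs.
  exists (sort le L0); split; [|split].
  + by rewrite sort_uniq undup_uniq.
  + by move=> s; rewrite mem_sort HL0.
  + apply: sorted_strict; first by rewrite sort_uniq undup_uniq.
    apply: (@sort_sorted_in _ (fun s => size s == n)).
    * move=> a b /eqP Ha /eqP Hb; rewrite /le.
      case: (eqVneq a b) => [->|Hne] //=.
      apply: rl_total => //; by rewrite Ha Hb.
    * apply/allP => s; rewrite HL0 => R.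
      by have [-> _ _] := proj1 (rgfP n s) R.
- move=> L [Hu [Hmem Hsort]].
  have Hsz : forall s, s \in L -> size s = n.
    by move=> s; rewrite Hmem => R; have [-> _ _] := proj1 (rgfP n s) R.
  apply/andP; split.
    by apply/allP => s /Hsz ->.
  have Hall : all (fun s => size s == n) L by apply/allP => s /Hsz ->.
  have Htr : {in (fun s => size s == n) & &, transitive (refl_lt P)}.
    move=> b a c /eqP Hb /eqP Ha /eqP Hc; apply: rl_trans => //; congruence.
  have Hom := sorted_ltn_nth_in Htr [::] Hall Hsort.
  have Hnth : forall a, a < size L -> nth [::] L a \in L by move=> a Ha; exact: mem_nth.
  apply: zip_all => i Hi.
  have Hi' : i < size L by lia.
  set s := nth [::] L i; set t := nth [::] L i.+1.
  have Rs : is_rgf n s by rewrite -Hmem; exact: Hnth.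
  have Rt : is_rgf n t by rewrite -Hmem; exact: Hnth.
  apply: (key hP G1 G2 Rs Rt); first by apply: Hom.
  move=> u Ru Hsu Hut.
  have Hul : u \in L by rewrite Hmem.
  set j := index u L.
  have Hj : j < size L by rewrite index_mem.
  have Ej : nth [::] L j = u by rewrite nth_index.
  have Su : size u = n by apply: Hsz.
  have Ss : size s = n by apply: Hsz; exact: Hnth.
  have St : size t = n by apply: Hsz; exact: Hnth.
  case: (ltngtP j i) => Hji.
  + have Hus : refl_lt P u s by rewrite -Ej; apply: Hom.
    have := @rl_trans P HPd s u s (etrans Ss (esym Su)) (etrans Su (esym Ss)) Hsu Hus.
    by rewrite rl_irr.
  + case: (ltngtP j i.+1) => Hji1; first lia.
    * have Htu : refl_lt P t u by rewrite -Ej; apply: Hom.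
      have := @rl_trans P HPd u t u (etrans Su (esym St)) (etrans St (esym Su)) Hut Htu.
      by rewrite rl_irr.
    * by move: Hut; rewrite -Ej Hji1 rl_irr.
  + by move: Hsu; rewrite -Ej Hji rl_irr.
Qed.
End Gen.

Lemma hP_sum s k : prefix_sum s k = \sum_(i < k) id (nth 0 s i).
Proof. by []. Qed.

Definition gU (x : nat) : nat := (x != 0) && ~~ odd x.

Lemma hP_U s k : prefix_U s k = \sum_(i < k) gU (nth 0 s i).
Proof.
rewrite /prefix_U; elim: k => [|k IH]; first by rewrite big_ord0.
rewrite big_ord_recr -IH.
have -> : iota 0 k.+1 = iota 0 k ++ [:: k] by rewrite -addn1 iotaD.
by rewrite count_cat /= addn0.
Qed.

Theorem corollary1 (n : nat) : 1 <= n ->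
  ((exists L, rgf_listing rgc_lt n L) /\
   (forall L, rgf_listing rgc_lt n L -> adj_gray_code 3 n L)) /\
  ((exists L, rgf_listing corgc_lt n L) /\
   (forall L, rgf_listing corgc_lt n L -> adj_gray_code 3 n L)).
Proof.
move=> _; split.
- apply: (@gen_thm prefix_sum id hP_sum) => // M /=; by rewrite /= negbK; case: (odd M).
- apply: (@gen_thm prefix_U gU hP_U) => // M.
  by rewrite /gU /= !negbK; case: (odd M).
Qed.
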